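(* If $X$ is a crowded submaximal space, then $X$ has no weakly converging sequences.
   Context: A space is crowded if it is non-empty and has no isolated points. A space is submaximal if every dense subset of it is open. A weakly converging sequence in $X$ is a countably infinite family $\mathcal S=\{S_n:n\in\omega\}$ of pairwise disjoint non-empty finite subsets of $X$ for which there is a point $x\in X$ such that for every neighborhood $W$ of $x$ there is a finite set $F\subseteq\omega$ with $S_n\cap W\neq\emptyset$ for all $n\in\omega\setminus F$. *)

(* Defs.v *)
From HB Require Import structures.
From mathcomp Require Import all_boot all_order.
From mathcomp Require Import all_classical all_reals all_analysis.
Set Implicit Arguments. Unset Strict Implicit. Unset Printing Implicit Defensive.
Local Open Scope classical_set_scope.

Definition crowded (X : topologicalType) : Prop :=
  [set: X] !=set0 /\ forall x : X, ~ isolated [set: X] x.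

Definition submaximal (X : topologicalType) : Prop :=
  forall D : set X, dense D -> open D.

Definition weakly_converging_sequence (X : topologicalType)
    (S : nat -> set X) : Prop :=
  (forall n m, n <> m -> S n `&` S m = set0) /\
  (forall n, S n !=set0) /\
  (forall n, finite_set (S n)) /\
  exists x : X, forall W : set X, nbhs x W ->
    exists F : set nat, finite_set F /\
      forall n, ~ F n -> S n `&` W !=set0.

(* Main.v *)
Require Import Defs.
From mathcomp Require Import all_boot all_order.
From mathcomp Require Import all_classical all_reals all_analysis.
Set Implicit Arguments. Unset Strict Implicit. Unset Printing Implicit Defensive.
Local Open Scope classical_set_scope.

Lemma dense_compl_seq (X : topologicalType) : crowded X -> submaximal X ->
  forall s : seq X, dense (~` [set` s]).
Proof.
move=> [_ Hc] Hs; elim=> [|z s IH].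
  move=> O [y Oy] _; exists y; split => //.
have -> : ~` [set` (z :: s)] = ~` [set` s] `&` ~` [set z].
  apply/seteqP; split => y /=; rewrite in_cons.
    by move=> h; split => [ys|yz]; apply: h; rewrite ?ys ?yz ?eqxx ?orbT.
  by move=> [h1 h2] /orP [/eqP|]. 
move=> W W0 oW.
have oW' : open (W `&` ~` [set` s]) by apply: openI => //; exact: Hs.
have [y [Wy sy]] := IH W W0 oW.
apply: contrapT => H.
have sub : W `&` ~` [set` s] `<=` [set z].
  move=> u [Wu su]; apply: contrapT => uz; apply: H; exists u; split => //.
have yz : y = z by apply: sub.
subst y.
apply: (Hc z); split; first by rewrite inE.
exists (W `&` ~` [set` s]).
  by apply: open_nbhs_nbhs; split.
apply/seteqP; split => u.
  by move=> [/sub -> _].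
by move=> -> /=; split.
Qed.

Lemma finite_open_empty (X : topologicalType) : crowded X -> submaximal X ->
  forall (Y U : set X), finite_set Y -> open U -> U `<=` Y -> U = set0.
Proof.
move=> Hc Hs Y U /finite_seqP [s ->] oU UY.
apply/seteqP; split => // y Uy.
have [z [Uz sz]] := dense_compl_seq Hc Hs s (ex_intro _ y Uy) oU.
by apply: sz; apply: UY.
Qed.

Definition TT (X : topologicalType) (S : nat -> set X) (x : X) (N : set nat) :=
  \bigcup_(n in N) S n `\` [set x].

Definition OO (X : topologicalType) (S : nat -> set X) (x : X) (N : set nat) :=
  interior (TT S x N).

Lemma OO_mono (X : topologicalType) (S : nat -> set X) x (N M : set nat) :
  N `<=` M -> OO S x N `<=` OO S x M.
Proof.
move=> NM; apply: interiorS => y [[n Nn Sy] yx]; split => //; exists n => //; exact: NM.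
Qed.

Lemma OO_disj (X : topologicalType) (S : nat -> set X) x (G A B : set nat) :
  crowded X -> submaximal X ->
  (forall n m, n <> m -> S n `&` S m = set0) ->
  (forall n, finite_set (S n)) -> finite_set G -> A `&` B = set0 ->
  OO S x (G `|` A) `&` OO S x (G `|` B) = set0.
Proof.
move=> Hc Hs Hd Hf HG AB.
apply: (finite_open_empty Hc Hs (Y := \bigcup_(n in G) S n)).
- by apply: bigcup_finite.
- by apply: openI; apply: open_interior.
move=> y [/interior_subset [[n Hn Sny] _] /interior_subset [[m Hm Smy] _]].
have nm : n = m.
  apply: contrapT => nm; have := Hd _ _ nm.
  by move/seteqP => [+ _] => /(_ y (conj Sny Smy)).
subst m; exists n => //.
case: Hn => // An; case: Hm => // Bn.
by have : (A `&` B) n by []; rewrite AB.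
Qed.

Lemma key (X : topologicalType) (S : nat -> set X) x (N : set nat) :
  submaximal X ->
  (forall W : set X, nbhs x W ->
    exists F : set nat, finite_set F /\ forall n, ~ F n -> S n `&` W !=set0) ->
  exists F : set nat, finite_set F /\
    forall n, N n -> ~ F n -> ~ S n x -> S n `&` OO S x N !=set0.
Proof.
move=> Hs Hx.
pose C := TT S x N `\` OO S x N.
have dC : dense (~` C).
  move=> W [w Ww] oW; apply: contrapT => H.
  have WC : W `<=` C.
    by move=> u Wu; apply: contrapT => Cu; apply: H; exists u.
  have WO : W `<=` OO S x N.
    by rewrite /OO -open_subsetE // => u /WC [].
  by have [_ +] := WC w Ww; apply; apply: WO.
have oC := Hs _ dC.
have xC : (~` C) x by move=> [[_ /(_ erefl)]].
have [F [FF HF]] := Hx _ (open_nbhs_nbhs (conj oC xC)).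
exists F; split => // n Nn Fn Snx.
have [z [Snz Cz]] := HF n Fn.
have zx : z <> x by move=> zx; apply: Snx; rewrite -zx.
have Tz : TT S x N z by split => //; exists n.
exists z; split => //; apply: contrapT => Oz; exact: Cz.
Qed.

Definition incr (f : nat -> nat) := forall m n, (m < n)%N -> (f m < f n)%N.

Lemma incr_inj f : incr f -> injective f.
Proof.
move=> hf m n e; case: (ltngtP m n) => // /hf; rewrite e ltnn //.
Qed.

Lemma incr_comp f g : incr f -> incr g -> incr (f \o g).
Proof. by move=> hf hg m n /hg /hf. Qed.

Lemma step_seq (X : topologicalType) (S : nat -> set X) x :
  crowded X -> submaximal X ->
  (forall n m, n <> m -> S n `&` S m = set0) ->
  (forall n, finite_set (S n)) ->
  forall (G : set nat) (f : nat -> nat), finite_set G -> incr f ->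
  forall s : seq X, exists h, [/\ incr h, (0 < h 0)%N &
    forall y, y \in s -> ~ OO S x (G `|` range (f \o h)) y].
Proof.
move=> Hc Hs Hd Hf G f HG hf; elim=> [|y s [h [hh h0 hs]]].
  by exists succn; split => // m n.
have h1i : incr (h \o double) by apply: incr_comp => // m n; rewrite ltn_double.
have h2i : incr (h \o (succn \o double)).
  by apply: incr_comp => // m n /=; rewrite ltnS ltn_double.
have sub1 : forall k : nat -> nat, OO S x (G `|` range (f \o (h \o k))) `<=` OO S x (G `|` range (f \o h)).
  move=> k; have H : (G `|` range (f \o (h \o k))) `<=` (G `|` range (f \o h)).
    by move=> n [Gn|[m _ <-]]; [left|right; exists (k m)].
  exact: OO_mono H.
have AB : range (f \o (h \o double)) `&` range (f \o (h \o (succn \o double))) = set0.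
  apply/seteqP; split => // n [[a _ <-] [b _ /=]].
  move/(incr_inj (incr_comp hf hh))/(congr1 odd) => /=.
  by rewrite !odd_double.
have := OO_disj x Hc Hs Hd Hf HG AB.
move/seteqP => [D _].
case: (pselect (OO S x (G `|` range (f \o (h \o double))) y)) => Hy.
  exists (h \o (succn \o double)); split => //=.
    exact: (ltn_trans h0 (hh 0 1 isT)).
  move=> z; rewrite in_cons => /orP [/eqP ->|zs].
    by move=> Hy2; exact: (D y (conj Hy Hy2)).
  by move/sub1; apply: hs.
exists (h \o double); split => //= z; rewrite in_cons => /orP [/eqP -> //|zs].
by move/sub1; apply: hs.
Qed.

Lemma dep_chain {A : Type} (P : A -> Prop) (R : A -> A -> Prop) :
  (forall a, P a -> exists b, P b /\ R a b) ->
  forall a0, P a0 -> exists u : nat -> A, u 0%N = a0 /\ forall n, P (u n) /\ R (u n) (u n.+1).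
Proof.
move=> HR a0 Pa0.
have [g Hg] : exists g : {a | P a} -> {a | P a}, forall q, R (sval q) (sval (g q)).
  have ex : forall q : {a | P a}, exists r : {a | P a}, R (sval q) (sval r).
    move=> [a Pa]; have [b [Pb Rab]] := HR a Pa; by exists (exist _ b Pb).
  have [g' Hg'] := choice ex; by exists g'.
exists (fun n => sval (iter n g (exist _ a0 Pa0))); split => // n.
split; first exact: svalP.
by rewrite iterS; apply: Hg.
Qed.

Lemma nat_seq_bound (s : seq nat) : exists B, forall n, (B <= n)%N -> n \notin s.
Proof.
elim: s => [|a s [B HB]]; first by exists 0%N.
exists (maxn B a.+1) => n; rewrite geq_max => /andP [Bn an].
rewrite in_cons negb_or HB // andbT; apply/eqP => na; subst n.
by rewrite ltnn in an.
Qed.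

Lemma finite_nat_bound (F : set nat) : finite_set F -> exists B, forall n, (B <= n)%N -> ~ F n.
Proof.
move=> /finite_seqP [s ->]; have [B HB] := nat_seq_bound s.
by exists B => n /HB /negP.
Qed.

Unset Implicit Arguments.

Theorem mainTheorem3 (X : topologicalType) :
  crowded X -> submaximal X ->
  ~ exists S : nat -> set X, weakly_converging_sequence S.
Proof.
move=> Hc Hs [S [Hd [Hne [Hf [x Hx]]]]].
pose P (p : set nat * (nat -> nat)) := finite_set p.1 /\ incr p.2.
pose R (p q : set nat * (nat -> nat)) := q.1 = p.1 `|` [set p.2 0%N] /\
  exists h, [/\ incr h, (0 < h 0)%N, q.2 = p.2 \o h &
    forall y, S (p.2 0%N) y -> ~ OO S x (q.1 `|` range q.2) y].
have HR : forall a, P a -> exists b, P b /\ R a b.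
  move=> [G f] [HG hf] /=.
  have HG' : finite_set (G `|` [set f 0%N]) by rewrite finite_setU; split => //; exact: finite_set1.
  have [s Hs0] := (finite_seqP (S (f 0%N))).1 (Hf (f 0%N)).
  have [h [hh h0 hs]] := step_seq x Hc Hs Hd Hf HG' hf s.
  exists (G `|` [set f 0%N], f \o h); split.
    by split => //; exact: incr_comp.
  split => //; exists h; split => // y; rewrite Hs0 => ys.
  exact: hs.
have P0 : P (set0, id) by split => //; exact: finite_set0.
have [u [u0 Hu]] := dep_chain HR P0.
pose k n := (u n).2 0%N.
have kS : forall n, (k n < k n.+1)%N.
  move=> n; have [_ [_ [h [_ h0 e _]]]] := Hu n.
  rewrite /k e /=; have [_ hf] := (Hu n).1; exact: hf.
have kge : forall n, (n <= k n)%N.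
  elim=> // n IH; exact: leq_ltn_trans IH (kS n).
have rng : forall j d, range (u (j + d)%N).2 `<=` range (u j).2.
  move=> j; elim=> [|d IH]; first by rewrite addn0.
  rewrite addnS; have [_ [_ [h [_ _ -> _]]]] := Hu (j + d)%N.
  move=> n [m _ <-]; apply: IH; by exists (h m).
have Gmono : forall i d, (u i).1 `<=` (u (i + d)%N).1.
  move=> i; elim=> [|d IH]; first by rewrite addn0.
  rewrite addnS; have [_ [-> _]] := Hu (i + d)%N.
  by move=> n /IH; left.
have kG : forall i, (u i.+1).1 (k i).
  by move=> i; have [_ [-> _]] := Hu i; right.
pose N := range k.
have Nsub : forall j, N `<=` (u j.+1).1 `|` range (u j.+1).2.
  move=> j n [i _ <-]; case: (leqP i j) => ij.
    left; have := Gmono i.+1 (j - i)%N; rewrite addSn subnKC //.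
    by apply; apply: kG.
  right; have := rng j.+1 (i - j.+1)%N; rewrite subnKC //.
  by apply; exists 0%N.
have avoid : forall j, S (k j) `&` OO S x N = set0.
  move=> j; apply/seteqP; split => // y [Sy Oy].
  have [_ [_ [h [_ _ _ H]]]] := Hu j.
  by apply: (H y Sy); apply: (OO_mono (Nsub j)).
have [F [FF HF]] := key N Hs Hx.
have [B HB] := finite_nat_bound FF.
have nF : forall j, ~ F (k (B + j)%N).
  move=> j; apply: HB; apply: leq_trans (kge _); exact: leq_addr.
have knx : exists j, ~ S (k (B + j)%N) x.
  apply: contrapT => H.
  have H0 : S (k (B + 0)%N) x by apply: contrapT => h; apply: H; exists 0%N.
  have H1 : S (k (B + 1)%N) x by apply: contrapT => h; apply: H; exists 1%N.
  have ne : k (B + 0)%N <> k (B + 1)%N.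
    by move=> e; have := kS (B + 0)%N; rewrite addn1 addn0 in e *; rewrite e ltnn.
  have := Hd _ _ ne; move/seteqP => [+ _] => /(_ x (conj H0 H1)) //.
have [j Hj] := knx.
have Nk : N (k (B + j)%N) by exists (B + j)%N.
have [z Hz] := HF _ Nk (nF j) Hj.
by rewrite avoid in Hz.
Qed.
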